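(* Let $G$ be a finite group and $p$ a prime such that the Sylow $p$-subgroups of $G$ are cyclic of order $p^r$ with $r\ge1$. For an integer $k$, let $\mathcal P(G,k)$ denote the number of elements of $G$ whose order is divisible by $p^k$. Then, for every $1\le k\le r$, $$\mathcal P(G,k)=\frac{p^{r-k+1}-1}{p^{r-k+1}}\cdot\frac{|G|\,|Z_G(Q)|}{|N_G(Q)|},$$ where $Q$ is any non-trivial $p$-subgroup of $G$ (the ratio $|Z_G(Q)|/|N_G(Q)|$ does not depend on this choice). Furthermore, $\mathcal P(G,0)=|G|$, and $\mathcal P(G,k)=0$ for $k>r$.
   Context: $Z_G(Q)$ denotes the centraliser and $N_G(Q)$ the normaliser of $Q$ in $G$. *)

(* Defs.v *)
From mathcomp Require Import all_boot all_order all_algebra all_fingroup all_solvable.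
Set Implicit Arguments. Unset Strict Implicit. Unset Printing Implicit Defensive.

Definition nPow (gT : finGroupType) (G : {set gT}) (p k : nat) : nat :=
  #|[set x in G | (p ^ k %| #[x]%g)%N]|.

(* Main.v *)
Require Import Defs.
From mathcomp Require Import all_boot all_order all_algebra all_fingroup all_solvable.
From mathcomp Require Import zify.
Import GRing.Theory Num.Theory.
Local Open Scope group_scope.
Set Implicit Arguments. Unset Strict Implicit. Unset Printing Implicit Defensive.

Section Aux.
Variables (gT : finGroupType) (p : nat).
Hypothesis pr_p : prime p.
Implicit Types G H S X Y Q : {group gT}.

Lemma cyc_meet S X Y : cyclic S -> p.-group S -> X \subset S -> Y \subset S ->
  X :!=: 1 -> Y :!=: 1 -> X :&: Y :!=: 1.
Proof.
move=> cS pS sXS sYS ntX ntY.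
have pX := pgroupS sXS pS; have pY := pgroupS sYS pS.
have cX := cyclicS sXS cS; have cY := cyclicS sYS cS.
have oX := Ohm1_cyclic_pgroup_prime cX pX ntX.
have oY := Ohm1_cyclic_pgroup_prime cY pY ntY.
have sOX : 'Ohm_1(X) \subset S := subset_trans (Ohm_sub 1 X) sXS.
have sOY : 'Ohm_1(Y) \subset S := subset_trans (Ohm_sub 1 Y) sYS.
have /eqP eqO : 'Ohm_1(X)%G == 'Ohm_1(Y)%G :> {set gT}.
  by rewrite (eq_subG_cyclic cS sOX sOY) oX oY.
apply: contraTneq (Ohm_sub 1 Y) => tXY.
have : 'Ohm_1(X) \subset X :&: Y by rewrite subsetI Ohm_sub eqO Ohm_sub.
rewrite tXY subG1 => /eqP O1; move: oX; rewrite O1 cards1 => p1.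
by move: pr_p; rewrite -p1.
Qed.

Lemma centA G S Q n : p.-Sylow(G) S -> cyclic S -> Q \subset S -> Q :!=: 1 ->
  n \in 'N_G(S) -> n \in 'C(Q) -> n \in 'C(S).
Proof.
move=> sylS cS sQS ntQ Nn Cn.
have pS := pHall_pgroup sylS; have sSG := pHall_sub sylS.
have abS := cyclic_abelian cS.
have cnN : <[n]> \subset 'N_G(S) by rewrite cycle_subG.
have cnC : <[n]> \subset 'C(Q) by rewrite cycle_subG.
have Np : n.`_p \in S.
  have sylN : p.-Sylow('N_G(S)) S by rewrite Sylow_subnorm.
  have nsS : S <| 'N_G(S) by rewrite normal_subnorm.
  rewrite (mem_normal_Hall sylN nsS) ?p_elt_constt //.
  exact: (subsetP cnN) (cycle_constt _ _).
set m := n.`_p^'.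
have mN : m \in 'N(S).
  have := (subsetP cnN) _ (cycle_constt p^' n); rewrite inE => /andP[_ //].
have mC : m \in 'C(Q) := (subsetP cnC) _ (cycle_constt p^' n).
have nSA : <[m]> \subset 'N(S) by rewrite cycle_subG.
have coSA : coprime #|S| #|<[m]>|.
  by rewrite (pnat_coprime pS) // -orderE; apply: p_elt_constt.
have TI := coprime_abel_cent_TI nSA coSA abS.
have sRS : [~: S, <[m]>] \subset S by rewrite commg_subl.
have sQC : Q \subset 'C_S(<[m]>).
  by rewrite subsetI sQS centsC cycle_subG.
have ntC : 'C_S(<[m]>)%G :!=: 1.
  by apply: contraNneq ntQ => C1; rewrite -subG1 -C1.
have R1 : [~: S, <[m]>] = 1.
  have [//|ntR] := eqVneq [~: S, <[m]>] 1.
  have sCS : 'C_S(<[m]>) \subset S := subsetIl _ _.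
  have := cyc_meet cS pS sRS sCS ntR ntC.
  by rewrite /= setIA (setIidPl sRS) TI eqxx.
have mCS : m \in 'C(S).
  have : S \subset 'C(<[m]>) by apply/commG1P.
  by rewrite centsC cycle_subG.
by rewrite -(consttC p n) groupM // (subsetP abS).
Qed.
End Aux.
Section Burn.
Variables (gT : finGroupType) (p : nat).
Hypothesis pr_p : prime p.
Implicit Types G H S T X Y Q : {group gT}.

Lemma conj_comm (x y : gT) : commute x y -> x ^ y = x.
Proof. by move=> cxy; rewrite /conjg cxy mulKg. Qed.

Lemma fusion H T a u : p.-Sylow(H) T -> abelian T -> 'N_H(T) \subset 'C(T) ->
  a \in T -> u \in H -> a ^ u \in T -> a ^ u = a.
Proof.
move=> sylT abT nTc Ta Hu Tb.
have sTH := pHall_sub sylT.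
have sTC : T \subset 'C_H[a ^ u].
  by rewrite subsetI sTH sub_cent1 (subsetP abT).
have sTuC : T :^ u \subset 'C_H[a ^ u].
  rewrite subsetI -{1}(conjGid Hu) conjSg sTH cent1J conjSg sub_cent1.
  exact: (subsetP abT).
have sylTC : p.-Sylow('C_H[a ^ u]) T := pHall_subl sTC (subsetIl _ _) sylT.
have sylTuC : p.-Sylow('C_H[a ^ u]) (T :^ u)%G.
  by apply: pHall_subl sTuC (subsetIl _ _) _; rewrite pHallJ.
have [c Cc defT] := Sylow_trans sylTuC sylTC.
have /setIP[Hc /cent1P cc] := Cc.
have Nn : u * c \in 'N_H(T).
  by rewrite inE groupM //; apply/normP; rewrite conjsgM -defT.
have Cn := (subsetP nTc) _ Nn.
have e : a ^ (u * c) = a.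
  by apply: conj_comm; apply/esym/(centP Cn).
by rewrite conjgM conj_comm in e.
Qed.

Import FiniteModule.

Lemma transfer_T H T (sTH : T \subset H) (abTi : abelian (idm T @* T)) g :
  p.-Sylow(H) T -> 'N_H(T) \subset 'C(T) -> g \in T ->
  transfer H abTi g = (fmod abTi g *+ #|H : T|)%R.
Proof.
move=> sylT nTc Tg.
have abT : abelian T by have := abTi; rewrite morphim_idm.
have TA : T \subset idm T @* T by rewrite morphim_idm.
have Hg : g \in H := subsetP sTH g Tg.
have trX := transversalP (rcosets_cycle_partition sTH Hg).
rewrite (transfer_cycle_expansion sTH abTi Hg trX).
rewrite -(sum_index_rcosets_cycle sTH Hg trX) -GRing.sumrMnr.
apply: eq_bigr => x Xx.
have Hx : x \in H := subsetP (transversal_sub trX) x Xx.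
set w := g ^+ _.
have Tw : w \in T by rewrite groupX.
have Twx : w ^ x^-1 \in T.
  have := mulg_exp_card_rcosets T g x; rewrite mem_rcoset.
  by rewrite conjgE invgK mulgA.
rewrite (@fusion H T w x^-1 sylT abT nTc Tw (groupVr Hx) Twx) /=.
by rewrite /restrm /= /w fmodX // (subsetP TA).
Qed.

Lemma burnside_count H T : p.-Sylow(H) T -> abelian T ->
  'N_H(T) \subset 'C(T) ->
  (#|[set z in H | p^'.-elt z]| * #|T| = #|H|)%N.
Proof.
move=> sylT abT nTc.
have sTH := pHall_sub sylT.
have abTi : abelian (idm T @* T) by rewrite morphim_idm.
have TA : T \subset idm T @* T by rewrite morphim_idm.
pose tr := transfer_morphism H abTi.
pose K := 'ker tr.
have nsK : K <| H := ker_normal tr.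
have sKH : K \subset H := normal_sub nsK.
have coT : coprime #|T| #|H : T|.
  by case/and3P: sylT => _ pT p'i; rewrite (pnat_coprime pT p'i).
have KT1 : K :&: T = 1.
  apply/trivgP/subsetP => g /setIP[Kg Tg]; rewrite inE.
  have e := mker Kg.
  have : transfer H abTi g = 0%R by exact: e.
  rewrite (transfer_T sTH abTi sylT nTc Tg) => /(congr1 val).
  rewrite fmvalZ fmodK ?(subsetP TA) // => gn.
  by rewrite -(expgK coT Tg) gn expg1n.
have le1 : (#|K| * #|T| <= #|H|)%N.
  rewrite -TI_cardMg // subset_leq_card // mul_subG //.
have le2 : (#|H| <= #|K| * #|T|)%N.
  rewrite -(Lagrange sKH) leq_mul2l; apply/orP; right.
  have <- : #|tr @* H| = #|H : K| by rewrite card_morphim setIid.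
  apply: (leq_trans (subset_leq_card (subsetT _))).
  rewrite -(card_imset _ val_inj).
  have -> : #|T| = #|idm T @* T| by rewrite morphim_idm.
  by apply: subset_leq_card; apply/subsetP => _ /imsetP[u _ ->]; apply: fmodP.
have eqKT : (#|K| * #|T| = #|H|)%N by apply/eqP; rewrite eqn_leq le1 le2.
have hallK : p^'.-Hall(H) K.
  rewrite /pHall sKH /=.
  have eK : #|K| = #|H : T|.
    apply/eqP; rewrite -(eqn_pmul2r (cardG_gt0 T)) eqKT mulnC Lagrange //.
  have eI : #|H : K| = #|T|.
    apply/eqP; by rewrite -(eqn_pmul2l (cardG_gt0 K)) Lagrange // eqKT.

  by rewrite /pgroup eK eI pnatNK; case/and3P: sylT => _ pT p'T; by apply/andP; split.
have -> : [set z in H | p^'.-elt z] = K.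
  apply/setP => z; rewrite inE.
  case Hz: (z \in H); last by apply/esym/negbTE; apply: contraFN Hz; apply: (subsetP sKH).
  by rewrite (mem_normal_Hall hallK nsK Hz).
exact: eqKT.
Qed.
End Burn.

Section Main.
Variables (gT : finGroupType) (G : {group gT}) (p r : nat).
Hypothesis pr_p : prime p.
Hypothesis hSyl : forall P : {group gT}, P \in 'Syl_p(G) -> cyclic P /\ #|P| = (p ^ r)%N.
Implicit Types S T Q : {group gT}.

Lemma sylP S : p.-Sylow(G) S -> cyclic S /\ #|S| = (p ^ r)%N.
Proof. by move=> sylS; apply: hSyl; rewrite inE. Qed.

Lemma ratio Q S : p.-Sylow(G) S -> Q \subset S -> Q :!=: 1 ->
  (#|'C_G(Q)| * #|'N_G(S)| = #|'N_G(Q)| * #|'C_G(S)|)%N.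
Proof.
move=> sylS sQS ntQ.
have [cS _] := sylP sylS.
have abS := cyclic_abelian cS; have sSG := pHall_sub sylS.
have sSC : S \subset 'C_G(Q).
  by rewrite subsetI sSG centsC (subset_trans sQS abS).
have sylSC : p.-Sylow('C_G(Q)) S := pHall_subl sSC (subsetIl _ _) sylS.
have F := Frattini_arg (subcent_normal G Q) sylSC.
have eN : 'N_('N_G(Q))(S) = 'N_G(S).
  apply/setP => x; rewrite !in_setI.
  case Gx: (x \in G) => //=; case Nx: (x \in 'N(S)); rewrite ?andbF ?andbT //.
  apply/normP; apply/eqP; rewrite (eq_subG_cyclic (G:=S) (H:=(Q:^x)%G) (K:=Q) cS) ?cardJg //.
    by rewrite -(normP Nx) conjSg.
rewrite eN in F.
have eC : 'C_G(Q) :&: 'N_G(S) = 'C_G(S).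
  apply/setP => x; rewrite !in_setI.
  case Gx: (x \in G) => //=; apply/idP/idP.
    case/andP => Cx Nx; apply: (centA pr_p sylS cS sQS ntQ) => //.
    by rewrite inE Gx.
  move=> Cx; rewrite (subsetP (centS sQS)) //=.
  exact: (subsetP (cent_sub S)).
by rewrite mul_cardG F eC.
Qed.

Lemma conjSyl S T : p.-Sylow(G) S -> p.-Sylow(G) T ->
  #|'N_G(S)| = #|'N_G(T)| /\ #|'C_G(S)| = #|'C_G(T)|.
Proof.
move=> sylS sylT; have [g Gg ->] := Sylow_trans sylS sylT.
split; [rewrite normJ | rewrite centJ]; by rewrite -{2}(conjGid Gg) -conjIg cardJg.
Qed.


Lemma fiber y : y \in G -> p.-elt y ->
  #|[set x in G | x.`_p == y]| = #|[set z in 'C_G[y] | p^'.-elt z]|.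
Proof.
move=> Gy py.
rewrite -[RHS](card_imset _ (mulgI y)); apply: eq_card => x.
rewrite inE; apply/andP/imsetP.
  case=> Gx /eqP xp; exists x.`_p^'; last by rewrite -{1}(consttC p x) xp.
  rewrite inE in_setI p_elt_constt andbT.
  have sxG : <[x]> \subset G by rewrite cycle_subG.
  rewrite (subsetP sxG _ (cycle_constt _ _)) /=.
  apply/cent1P; rewrite -xp.
  by apply: (centsP (cycle_abelian x)); apply: cycle_constt.
case=> z; rewrite inE in_setI => /andP[/andP[Gz /cent1P czy] p'z] ->.
rewrite groupM //= consttM; last by [].
by rewrite (constt_p_elt py) (constt1P _) ?mulg1.
Qed.


Lemma centy_facts S y : p.-Sylow(G) S -> y \in S -> y != 1 ->
  [/\ p.-Sylow('C_G[y]) S, 'N_('C_G[y])(S) = 'C_G(S) & 'C_G(S) \subset 'C_G[y]].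
Proof.
move=> sylS Sy nty.
have [cS oS] := sylP sylS.
have abS := cyclic_abelian cS; have sSG := pHall_sub sylS.
have sSC : S \subset 'C_G[y] by rewrite subsetI sSG sub_cent1 (subsetP abS).
have sCC : 'C_G(S) \subset 'C_G[y].
  by rewrite setIS // -cent_cycle centS // cycle_subG.
split => //; first exact: pHall_subl sSC (subsetIl _ _) sylS.
apply/eqP; rewrite eqEsubset; apply/andP; split.
  apply/subsetP => x; rewrite !in_setI -cent_cycle => /andP[/andP[Gx Cx] Nx].
  rewrite Gx /=; apply: (centA pr_p sylS cS _ _ (n := x)) Cx.
  - by rewrite cycle_subG.
  - by rewrite cycle_eq1.
  - by rewrite in_setI Gx.
rewrite subsetI sCC /=; apply: subset_trans (subsetIr _ _) (cent_sub S).
Qed.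

Lemma centy S y : p.-Sylow(G) S -> y \in S -> y != 1 ->
  (#|[set x in G | x.`_p == y]| * p ^ r = #|'C_G[y]|)%N.
Proof.
move=> sylS Sy nty.
have [sylSC eN _] := centy_facts sylS Sy nty.
have [cS oS] := sylP sylS.
have sSG := pHall_sub sylS.
rewrite fiber ?(subsetP sSG) ?(mem_p_elt (pHall_pgroup sylS)) // -oS.
apply: (burnside_count sylSC (cyclic_abelian cS)).
by rewrite eN subsetIr.
Qed.

Lemma centy2 S y : p.-Sylow(G) S -> y \in S -> y != 1 ->
  #|'C_G[y]| = (#|[set T in 'Syl_p(G) | y \in T]| * #|'C_G(S)|)%N.
Proof.
move=> sylS Sy nty.
have [sylSC eN sCC] := centy_facts sylS Sy nty.
have -> : [set T in 'Syl_p(G) | y \in T] = 'Syl_p('C_G[y]).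
  apply/setP => T; rewrite !inE; apply/andP/idP.
    case=> sylT Ty.
    have [_ _ sCT] := centy_facts sylT Ty nty.
    have [cT _] := sylP sylT.
    have sTC : T \subset 'C_G[y].
      by rewrite subsetI (pHall_sub sylT) sub_cent1 (subsetP (cyclic_abelian cT)).
    exact: pHall_subl sTC (subsetIl _ _) sylT.
  move=> sylT.
  have [c /setIP[Gc /cent1P cc] ->] := Sylow_trans sylSC sylT.
  split; first by rewrite pHallJ.
  by rewrite -(conj_comm (esym cc)) memJ_conjg.
by rewrite (card_Syl sylSC) eN mulnC Lagrange.
Qed.


Lemma cyc_count S k : p.-Sylow(G) S -> (1 <= k <= r)%N ->
  (#|[set y in S | p ^ k %| #[y]]| + p ^ (k - 1) = p ^ r)%N.
Proof.
move=> sylS /andP[k1 kr].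
have [cS oS] := sylP sylS.
have abS := cyclic_abelian cS; have pS := pHall_pgroup sylS.
pose L := Group (group_Ldiv (p ^ (k - 1)) abS).
have sLS : L \subset S by apply/subsetP => x /LdivP[].
have oL : #|L| = (p ^ (k - 1))%N.
  apply/eqP; rewrite eqn_dvd; apply/andP; split.
    rewrite -(exponent_cyclic (cyclicS sLS cS)).
    by apply/exponentP => x /LdivP[].
  apply: Frobenius_Ldiv; rewrite oS dvdn_exp2l //.
  by apply: leq_trans (leq_subr _ _) kr.
rewrite -oL -oS -(cardsID L S) (setIidPr sLS) addnC; congr (_ + _)%N.
apply: eq_card => y; rewrite !inE.
case Sy: (y \in S); rewrite ?andbF ?andbT //=.
have [m om] := p_natP (mem_p_elt pS Sy).
have p1 : (1 < p)%N := prime_gt1 pr_p.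
have := order_dvdn y (p ^ (k - 1)); rewrite om => <-.
rewrite !dvdn_Pexp2l //.
by apply/idP/idP => H; lia.
Qed.


Lemma dvd_part k (x : gT) : (p ^ k %| #[x.`_p]) = (p ^ k %| #[x]).
Proof.
by rewrite order_constt !pfactor_dvdn ?logn_part ?part_gt0 ?order_gt0.
Qed.

Lemma main_count k (P0 : {group gT}) : p.-Sylow(G) P0 -> (1 <= k <= r)%N ->
  (nPow G p k * p ^ r * #|'N_G(P0)| = #|'C_G(P0)| * #|G| * (p ^ r - p ^ (k - 1)))%N.
Proof.
move=> sylP0 hk; have /andP[k1 kr] := hk.
pose Y := [set y in G | p.-elt y && (p ^ k %| #[y])].
have p1 : (1 < p)%N := prime_gt1 pr_p.
have e1 : nPow G p k = (\sum_(y in Y) #|[set x in G | x.`_p == y]|)%N.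
  rewrite /nPow -sum1_card (partition_big (fun x => x.`_p) (mem Y)) /=.
    apply: eq_bigr => y Yy; rewrite sum1_card; apply: eq_card => x.
    rewrite unfold_in /= !inE; case Gx: (x \in G) => //=.
    case: eqP => [xy|_]; rewrite ?andbF ?andbT //.
    by move: Yy; rewrite -xy !inE dvd_part => /and3P[].
  move=> x; rewrite !inE => /andP[Gx dx].
  rewrite p_elt_constt dvd_part dx andbT.
  have sxG : <[x]> \subset G by rewrite cycle_subG.
  by rewrite andbT (subsetP sxG _ (cycle_constt _ _)).
have e2 : (nPow G p k * p ^ r = \sum_(y in Y) #|'C_G[y]|)%N.
  rewrite e1 big_distrl /=; apply: eq_bigr => y; rewrite inE => /and3P[Gy py dy].
  have sYG : <[y]> \subset G by rewrite cycle_subG.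
  have pY : p.-group <[y]> by rewrite /pgroup -orderE.
  have [S sylS sYS] := Sylow_superset sYG pY.
  have Sy : y \in S by rewrite -cycle_subG.
  have nty : y != 1.
    apply: contraTneq dy => ->; rewrite order1 dvdn1 -(expn0 p) eqn_exp2l //.
    by rewrite -lt0n.
  by rewrite (centy sylS Sy nty).
have hY : forall y, y \in Y -> exists2 S : {group gT}, p.-Sylow(G) S & (y \in S) && (y != 1).
  move=> y; rewrite inE => /and3P[Gy py dy].
  have sYG : <[y]> \subset G by rewrite cycle_subG.
  have pY : p.-group <[y]> by rewrite /pgroup -orderE.
  have [S sylS sYS] := Sylow_superset sYG pY.
  exists S => //; rewrite -cycle_subG sYS /=.
  apply: contraTneq dy => ->; rewrite order1 dvdn1 -(expn0 p) eqn_exp2l //.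
  by rewrite -lt0n.
have e3 : \sum_(y in Y) #|'C_G[y]| =
    (#|'C_G(P0)| * \sum_(y in Y) #|[set T in 'Syl_p(G) | y \in T]|)%N.
  rewrite big_distrr /=; apply: eq_bigr => y Yy.
  have [S sylS /andP[Sy nty]] := hY y Yy.
  by rewrite (centy2 sylS Sy nty) (conjSyl sylS sylP0).2 mulnC.
have e4 : \sum_(y in Y) #|[set T in 'Syl_p(G) | y \in T]| =
    \sum_(T in 'Syl_p(G)) #|[set y in T | p ^ k %| #[y]]|.
  transitivity (\sum_(y in Y) \sum_(T | (T \in 'Syl_p(G)) && (y \in T)) 1)%N.
    by apply: eq_bigr => y _; rewrite sum1dep_card.
  rewrite (exchange_big_dep (mem 'Syl_p(G))) /=; last by move=> y T _ /andP[].
  apply: eq_bigr => T; rewrite inE => sylT; rewrite sum1dep_card.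
  apply: eq_card => y; rewrite !inE.
  case Ty: (y \in T); rewrite ?andbF ?andbT //=.
  rewrite (subsetP (pHall_sub sylT)) ?(mem_p_elt (pHall_pgroup sylT)) //=.
  by rewrite sylT andbT.
have e5 : \sum_(T in 'Syl_p(G)) #|[set y in T | p ^ k %| #[y]]| =
    (#|'Syl_p(G)| * (p ^ r - p ^ (k - 1)))%N.
  rewrite -sum_nat_const; apply: eq_bigr => T; rewrite inE => sylT.
  by rewrite -(cyc_count sylT hk) addnK.
rewrite -e2 in e3; rewrite e3 e4 e5 (card_Syl sylP0) -(Lagrange (subsetIl G 'N(P0))).
set a := #|'C_G(P0)|; set b := #|'N_G(P0)|; set c := #|G : _|.
by rewrite [in RHS](mulnC b) !mulnA [in RHS]mulnAC.
Qed.

End Main.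

From mathcomp Require Import ring lra.
Unset Implicit Arguments.

Theorem proposition5p10 (gT : finGroupType) (G : {group gT}) (p r : nat) :
  prime p -> (1 <= r)%N ->
  (forall P : {group gT}, P \in 'Syl_p(G) -> cyclic P /\ #|P| = (p ^ r)%N) ->
  [/\ (forall (k : nat) (Q : {group gT}),
         (1 <= k <= r)%N -> Q \subset G -> p.-group Q -> Q :!=: 1 ->
         ((nPow G p k)%:R : rat)
         = (((p ^ (r - k + 1))%:R - 1) / (p ^ (r - k + 1))%:R
            * ((#|G| * #|'C_G(Q)|)%:R / #|'N_G(Q)|%:R))%R),
      nPow G p 0 = #|G|
    & forall k : nat, (r < k)%N -> nPow G p k = 0%N].
Proof.
move=> pr_p r1 hSyl.
have [P0 sylP0] := Sylow_exists p G.
have [cP0 oP0] : cyclic P0 /\ #|P0| = (p ^ r)%N by apply: hSyl; rewrite inE.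
split.
- move=> k Q hk sQG pQ ntQ.
  have [S sylS sQS] := Sylow_superset sQG pQ.
  have R := ratio pr_p hSyl sylS sQS ntQ.
  have [eN eC] := conjSyl sylS sylP0.
  rewrite eN eC in R.
  have M := main_count pr_p hSyl sylP0 hk.
  have p0 : (0 < p)%N := prime_gt0 pr_p.
  set a := (p ^ (k - 1))%N; set b := (p ^ (r - k + 1))%N.
  have epr : (p ^ r = a * b)%N.
    rewrite /a /b -expnD; congr (p ^ _)%N; case/andP: hk => k1 kr; lia.
  have b1 : (1 <= b)%N by rewrite expn_gt0 p0.
  have ed : (p ^ r - a = a * (b - 1))%N by rewrite epr mulnBr muln1.
  rewrite ed in M.
  rewrite epr in M.
  have Mr := congr1 (fun n => n%:R : rat) M; rewrite /= !natrM natrB // in Mr.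
  have Rr := congr1 (fun n => n%:R : rat) R; rewrite /= !natrM in Rr.
  have a0 : (a%:R : rat) != 0%R by rewrite pnatr_eq0 -lt0n expn_gt0 p0.
  have b0 : (b%:R : rat) != 0%R by rewrite pnatr_eq0 -lt0n expn_gt0 p0.
  have N00 : (#|'N_G(P0)|%:R : rat) != 0%R by rewrite pnatr_eq0 -lt0n cardG_gt0.
  have NQ0 : (#|'N_G(Q)|%:R : rat) != 0%R by rewrite pnatr_eq0 -lt0n cardG_gt0.
  have hCQ : (#|'C_G(Q)|%:R : rat) = (#|'N_G(Q)|%:R * #|'C_G(P0)|%:R / #|'N_G(P0)|%:R)%R.
    by rewrite -Rr mulfK.
  have hn : ((nPow G p k)%:R : rat) =
      (#|'C_G(P0)|%:R * #|G|%:R * (a%:R * (b%:R - 1)) / (a%:R * b%:R * #|'N_G(P0)|%:R))%R.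
    by rewrite -Mr -mulrA mulfK // mulf_neq0 // mulf_neq0.
  rewrite hn natrM hCQ; field.
  by rewrite N00 NQ0 a0 b0.
- by rewrite /nPow expn0; apply: eq_card => x; rewrite inE dvd1n andbT.
- move=> k rk; rewrite /nPow; apply/eqP; rewrite cards_eq0; apply/eqP/setP => x.
  rewrite !inE; apply/negbTE/negP => /andP[Gx dx].
  have := dvdn_trans dx (order_dvdG Gx).
  rewrite pfactor_dvdn ?cardG_gt0 // -logn_part -(card_Hall sylP0) oP0 pfactorK //.
  by rewrite leqNgt rk.
Qed.
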